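(* Let $\alpha:A^{\Delta}\to(H,V)$ be a homomorphism into a finite forest algebra with $H$ idempotent and commutative, and let $\Gamma_1,\ldots,\Gamma_r$ be the subminimal reachability classes of $(H,V)$. Then $\alpha_{\Gamma_{\mathsf{min}}}:A^{\Delta}\to(H_{\Gamma_{\mathsf{min}}},V_{\Gamma_{\mathsf{min}}})$ factors through the direct product homomorphism $\prod_{j=1}^r\alpha_{\ge\Gamma_j}:A^{\Delta}\to\prod_{j=1}^r(H_{\ge\Gamma_j},V_{\ge\Gamma_j})$. Further, each of the algebras $(H_{\ge\Gamma_j},V_{\ge\Gamma_j})$ has a unique subminimal reachability class.
   Context: $A^{\Delta}=(H_A,V_A)$ is the free forest algebra of forests and contexts over $A$. A forest algebra $(H,V)$: additive monoid $H$, monoid $V$ acting faithfully on the left, containing $g\mapsto g+h$, $g\mapsto h+g$. With $H$ idempotent and commutative, the sum $\infty$ of all elements of $H$ is absorbing. $\beta$ factors through $\gamma$ if $\gamma(s)=\gamma(s')$ implies $\beta(s)=\beta(s')$ for forests $s,s'$. The direct product homomorphism sends $s$ to the tuple $(\alpha_{\ge\Gamma_1}(s),\ldots,\alpha_{\ge\Gamma_r}(s))$. Reachability: $h\le h'$ iff $h=vh'$ for some $v\in V$; reachability classes are the classes of mutual reachability, partially ordered by $\le$. $\Gamma_{\mathsf{min}}$ is the class of $\infty$ (the least class); a class $\Gamma$ is subminimal if $\Gamma_{\mathsf{min}}<\Gamma$ with no class strictly between. A reachability ideal $I$ is a downward closed subset of $H$; the quotient $\alpha_I:A^{\Delta}\to(H/I,V/I)$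 identifies forests $s,s'$ iff $\alpha(s)=\alpha(s')\notin I$ or $\alpha(s),\alpha(s')\in I$ (so $H/I=(H\setminus I)\cup\{\infty\}$), contexts being identified when they act identically. For a class $\Gamma$: $\alpha_\Gamma$, $(H_\Gamma,V_\Gamma)$ correspond to $I=\{h:h\not>\Gamma\}$, and $\alpha_{\ge\Gamma}$, $(H_{\ge\Gamma},V_{\ge\Gamma})$ to $I=\{h:h\not\ge\Gamma\}$. *)

(* Defs.v *)
From mathcomp Require Import all_boot.
Set Implicit Arguments. Unset Strict Implicit. Unset Printing Implicit Defensive.

Inductive tree (A : Type) : Type := Node of A & seq (tree A).
Definition forest (A : Type) := seq (tree A).

(* A context is a forest with exactly one hole:  l ++ [t] ++ r, where the
   distinguished "tree" t is either the hole itself or a node whose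
   children form a context. *)
Inductive context (A : Type) : Type := Ctx of forest A & ctree A & forest A
with ctree (A : Type) : Type := CHole | CNode of A & context A.
Arguments CHole {A}.

Section FreeForestAlgebra.
Variable A : Type.

Definition hole : context A := Ctx [::] CHole [::].

Fixpoint fill (p : context A) (s : forest A) {struct p} : forest A :=
  match p with Ctx l t r => l ++ tfill t s ++ r end
with tfill (t : ctree A) (s : forest A) {struct t} : forest A :=
  match t with CHole => s | CNode a c => [:: Node a (fill c s)] end.

(* p q : plug the context q into the hole of p (so (p q) s = p (q s)) *)
Fixpoint ccomp (p q : context A) {struct p} : context A :=
  match p with
  | Ctx l t r =>
      match t with
      | CHole => let: Ctx ql qt qr := q in Ctx (l ++ ql) qt (qr ++ r)
      | CNode a c => Ctx l (CNode a (ccomp c q)) r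
      end
  end.
End FreeForestAlgebra.

Definition forest_algebra (H V : finType) (add : H -> H -> H) (zero : H)
    (mul : V -> V -> V) (one : V) (act : V -> H -> H) : Prop :=
  ((forall x y z, add x (add y z) = add (add x y) z) /\
   (forall x, add zero x = x) /\ (forall x, add x zero = x)) /\
  ((forall u v w, mul u (mul v w) = mul (mul u v) w) /\
   (forall v, mul one v = v) /\ (forall v, mul v one = v)) /\
  ((forall v w h, act (mul v w) h = act v (act w h)) /\
   (forall h, act one h = h)) /\
  (forall v w, (forall h, act v h = act w h) -> v = w) /\
  (forall h, (exists v, forall g, act v g = add g h) /\
             (exists v, forall g, act v g = add h g)).

Definition forest_hom (A : Type) (H V : Type) (add : H -> H -> H) (zero : H)
    (mul : V -> V -> V) (one : V) (act : V -> H -> H)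
    (aH : forest A -> H) (aV : context A -> V) : Prop :=
  [/\ aH [::] = zero, (forall s t, aH (s ++ t) = add (aH s) (aH t)),
      aV (hole A) = one, (forall p q, aV (ccomp p q) = mul (aV p) (aV q)) &
      (forall p s, aH (fill p s) = act (aV p) (aH s))].

(* Reachability, relative to a carrier D of elements of H (D = setT    *)
(* for the algebra itself, D = H/I for a quotient).                    *)
Section Reach.
Variables (H V : finType) (D : {set H}) (add : H -> H -> H) (zero : H)
  (act : V -> H -> H).

Definition reachb (x y : H) : bool := [exists v : V, x == act v y].
Definition rclass (x : H) : {set H} := [set y in D | reachb x y && reachb y x].
Definition rclasses : {set {set H}} := [set rclass x | x in D].
Definition cle (G G' : {set H}) : bool :=
  [exists x in G, exists y in G', reachb x y].
Definition clt (G G' : {set H}) : bool := cle G G' && (G != G').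
Definition infty : H := \big[add/zero]_(h in D) h.
Definition Gmin : {set H} := rclass infty.
Definition subminimal (G : {set H}) : bool :=
  [&& G \in rclasses, clt Gmin G &
      [forall G' in rclasses, ~~ (clt Gmin G' && clt G' G)]].
Definition subminimals : {set {set H}} := [set G in rclasses | subminimal G].
End Reach.

Section Quotient.
Variables (H V : finType) (add : H -> H -> H) (zero : H) (act : V -> H -> H).

Local Notation D := [set: H].
Local Notation inf := (infty D add zero).

(* I = { h : h not > Gamma }   (gives alpha_Gamma) *)
Definition ideal_gt (G : {set H}) : {set H} :=
  [set h | ~~ clt act G (rclass D act h)].
(* I = { h : h not >= Gamma }  (gives alpha_{>=Gamma}) *)
Definition ideal_ge (G : {set H}) : {set H} :=
  [set h | ~~ cle act G (rclass D act h)].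

(* the image of h in H/I = (H \ I) u {infty}: all of I is sent to infty *)
Definition qval (I : {set H}) (h : H) : H := if h \in I then inf else h.
Definition qcarrier (I : {set H}) : {set H} := [set qval I h | h : H].
Definition qadd (I : {set H}) (x y : H) : H := qval I (add x y).
(* V/I acts on H/I; a class of contexts acts as any of its members *)
Definition qact (I : {set H}) (v : V) (x : H) : H := qval I (act v x).

Definition q_subminimals (I : {set H}) : {set {set H}} :=
  subminimals (qcarrier I) (qadd I) (qval I zero) (qact I).
End Quotient.

(* Main.v *)
Require Import Defs.
From mathcomp Require Import all_boot.
Set Implicit Arguments. Unset Strict Implicit. Unset Printing Implicit Defensive.

Lemma map_eq_in (T U : eqType) (f g : T -> U) (s : seq T) x :
  map f s = map g s -> x \in s -> f x = g x.
Proof.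
elim: s => //= a s IH [e1 e2]; rewrite inE => /orP[/eqP->//|]; exact: IH.
Qed.

Lemma big_absorb (T : eqType) (op : T -> T -> T) (z e : T) (r : seq T) (P : pred T) :
  (forall x, op e x = e) -> (forall x, op x e = e) -> e \in r -> P e ->
  \big[op/z]_(i <- r | P i) i = e.
Proof.
move=> opl opr; elim: r => //= a r IH; rewrite inE => /orP[/eqP<-|er] Pe;
  rewrite big_cons.
  by rewrite Pe opl.
by case: ifP => _; rewrite IH.
Qed.

Section Proofs.
Variables (H V : finType) (add : H -> H -> H) (zero : H) (mul : V -> V -> V) (one : V)
  (act : V -> H -> H).
Hypothesis FA : forest_algebra add zero mul one act.
Hypothesis idem : forall x, add x x = x.
Hypothesis comm : forall x y, add x y = add y x.

Let addA : forall x y z, add x (add y z) = add (add x y) z.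
Proof. by case: FA => [[]]. Qed.
Let actM : forall v w h, act (mul v w) h = act v (act w h).
Proof. by case: FA => _ [_ [[]]]. Qed.
Let act1 : forall h, act one h = h.
Proof. by case: FA => _ [_ [[]]]. Qed.
Let addv : forall h, exists v, forall g, act v g = add g h.
Proof. by case: FA => _ [_ [_ [_ X]]] h; case: (X h). Qed.

Local Notation R := (reachb act).
Local Notation inf := (infty [set: H] add zero).
Local Notation Cls := (rclass [set: H] act).

Lemma R_refl x : R x x.
Proof. by apply/existsP; exists one; rewrite act1. Qed.

Lemma R_trans x y z : R x y -> R y z -> R x z.
Proof.
move=> /existsP[v /eqP->] /existsP[w /eqP->].
by apply/existsP; exists (mul v w); rewrite actM.
Qed.

Lemma R_act v x : R (act v x) x.
Proof. by apply/existsP; exists v. Qed.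

Lemma add_inf_gen y (r : seq H) (P : pred H) : y \in r -> P y ->
  add y (\big[add/zero]_(h <- r | P h) h) = \big[add/zero]_(h <- r | P h) h.
Proof.
elim: r => //= a r IH; rewrite inE => /orP[/eqP->|yr] Py; rewrite big_cons.
  by rewrite Py addA idem.
case: ifP => Pa; last exact: IH.
by rewrite addA (comm y a) -addA IH.
Qed.

Lemma add_inf y : add y inf = inf.
Proof. by apply: add_inf_gen; rewrite ?mem_index_enum ?in_setT. Qed.

Lemma inf_add y : add inf y = inf.
Proof. by rewrite comm add_inf. Qed.

Lemma R_inf y : R inf y.
Proof.
have [v Hv] := addv inf.
by apply/existsP; exists v; rewrite Hv add_inf.
Qed.

Lemma inCls x y : (y \in Cls x) = R x y && R y x.
Proof. by rewrite /rclass inE in_setT. Qed.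

Lemma Cls_eq x y : R x y -> R y x -> Cls x = Cls y.
Proof.
move=> xy yx; apply/setP => z; rewrite !inCls.
apply/andP/andP => [[a b]|[a b]]; split; by do ?[apply: R_trans; eassumption].
Qed.

Lemma Cls_eqE x y : Cls x = Cls y -> R x y && R y x.
Proof. by move=> e; rewrite -inCls e inCls R_refl. Qed.

Lemma cle_Cls x y : cle act (Cls x) (Cls y) = R x y.
Proof.
apply/idP/idP.
  case/existsP=> a /andP[]; rewrite inCls => /andP[xa _] /existsP[b /andP[]].
  rewrite inCls => /andP[_ yb] ab.
  by apply: R_trans xa (R_trans ab yb).
move=> xy; apply/existsP; exists x; rewrite inCls R_refl /=.
by apply/existsP; exists y; rewrite inCls R_refl.
Qed.


Local Notation Gm := (Gmin [set: H] add zero act).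

Lemma mem_gt h : (h \in ideal_gt act Gm) = R h inf.
Proof.
rewrite /ideal_gt inE /clt /Gmin cle_Cls R_inf /= negbK.
apply/eqP/idP => [e|hi]; first by case/andP: (Cls_eqE e).
by apply: Cls_eq; rewrite ?R_inf.
Qed.

Lemma mem_ge x h : (h \in ideal_ge act (Cls x)) = ~~ R x h.
Proof. by rewrite /ideal_ge inE cle_Cls. Qed.

Lemma in_rclasses x : Cls x \in rclasses [set: H] act.
Proof. by apply/imsetP; exists x; rewrite ?in_setT. Qed.

Lemma exists_sub h : ~~ R h inf ->
  exists x, Cls x \in subminimals [set: H] add zero act /\ R x h.
Proof.
move=> hi.
pose P := fun x => ~~ R x inf && R x h.
have Ph : P h by rewrite /P hi R_refl.
case: (arg_minnP (fun x => #|[set y | R y x]|) Ph) => x /andP[xi xh] Hmin.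
exists x; split=> //.
rewrite /subminimals inE in_rclasses /subminimal in_rclasses /=.
apply/andP; split.
  rewrite /clt /Gmin cle_Cls R_inf /=; apply/negP => /eqP e.
  by case/andP: (Cls_eqE e) => _ xi'; rewrite xi' in xi.
apply/forall_inP => G' /imsetP[y _ ->]; apply/negP => /andP[].
rewrite /clt /Gmin !cle_Cls R_inf /= => ne /andP[yx ne2].
have yi : ~~ R y inf.
  apply/negP => yi; move/negP: ne; apply; apply/eqP; apply: Cls_eq => //; exact: R_inf.
have xy : ~~ R x y.
  apply/negP => xy; move/negP: ne2; apply; apply/eqP; exact: Cls_eq.
have := Hmin y; rewrite /P yi (R_trans yx xh) => /(_ isT).
apply/negP; rewrite -ltnNge; apply: proper_card; apply/properP; split.
  by apply/subsetP => z; rewrite !inE => zy; apply: R_trans zy yx.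
by exists x; rewrite !inE ?R_refl.
Qed.

Lemma part1 (h h' : H) :
  [seq qval add zero (ideal_ge act G) h | G <- enum (subminimals [set: H] add zero act)] =
  [seq qval add zero (ideal_ge act G) h' | G <- enum (subminimals [set: H] add zero act)] ->
  qval add zero (ideal_gt act Gm) h = qval add zero (ideal_gt act Gm) h'.
Proof.
move=> E.
have key : forall a b, [seq qval add zero (ideal_ge act G) a | G <- enum (subminimals [set: H] add zero act)] =
  [seq qval add zero (ideal_ge act G) b | G <- enum (subminimals [set: H] add zero act)] ->
  ~~ R a inf -> a = b.
  move=> a b Eab ai; have [x [xs xa]] := exists_sub ai.
  have := map_eq_in Eab (_ : Cls x \in enum _); rewrite mem_enum => /(_ xs).
  rewrite /qval !mem_ge xa /=; case: ifP => // _ ainf.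
  by move: ai; rewrite ainf R_refl.
rewrite /qval !mem_gt.
case: (boolP (R h inf)) => hi; case: (boolP (R h' inf)) => h'i //.
- by have e := key h' h (esym E) h'i; rewrite e hi in h'i.
- by have e := key h h' E hi; rewrite e h'i in hi.
- exact: key.
Qed.

Section Part2.
Variable g : H.
Hypothesis gi : ~~ R g inf.
Local Notation I := (ideal_ge act (Cls g)).
Local Notation qv := (qval add zero I).
Local Notation D' := (qcarrier add zero I).
Local Notation R' := (reachb (qact add zero act I)).
Local Notation Cls' := (rclass D' (qact add zero act I)).

Lemma memI h : (h \in I) = ~~ R g h.
Proof. exact: mem_ge. Qed.

Lemma infI : inf \in I.
Proof. by rewrite memI. Qed.

Lemma qv_inf : qv inf = inf.
Proof. by rewrite /qval infI. Qed.

Lemma memD x : (x \in D') = (x == inf) || R g x.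
Proof.
apply/imsetP/idP => [[h _ ->]|].
  by rewrite /qval memI; case: ifP => [_|/negbFE ->]; rewrite ?eqxx ?orbT.
case/orP => [/eqP->|gx]; first by exists inf; rewrite ?qv_inf.
by exists x; rewrite // /qval memI gx.
Qed.

Lemma R'_inf y : R' inf y.
Proof.
have [v Hv] := addv inf.
by apply/existsP; exists v; rewrite /qact Hv add_inf qv_inf.
Qed.

Lemma R'_notI x y : R g x -> R' x y = R x y.
Proof.
move=> gx; apply/existsP/existsP => [[v /eqP]|[v /eqP e]].
  rewrite /qact /qval memI.
  case: ifP => [_ e|_ ->]; last by exists v.
  by rewrite e in gx; move: gi; rewrite gx.
by exists v; rewrite /qact /qval memI -e gx.
Qed.

Lemma R'_toinf y : R' y inf -> y = inf.
Proof.
case/existsP => v /eqP ->; rewrite /qact /qval memI.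
case: ifP => // /negbFE gv; move: gi; rewrite (R_trans gv (R_act v inf)) //.
Qed.

Lemma infty' : infty D' (qadd add zero I) (qv zero) = inf.
Proof.
apply: big_absorb; rewrite ?mem_index_enum ?memD ?eqxx //.
  by move=> x; rewrite /qadd inf_add qv_inf.
by move=> x; rewrite /qadd add_inf qv_inf.
Qed.

Lemma Cls'_inf : Cls' inf = [set inf].
Proof.
apply/setP => y; rewrite /rclass !inE.
apply/andP/eqP => [[_ /andP[_ /R'_toinf]]//|->].
by rewrite memD eqxx R'_inf.
Qed.

Lemma Gmin' : Gmin D' (qadd add zero I) (qv zero) (qact add zero act I) = [set inf].
Proof. by rewrite /Gmin infty' Cls'_inf. Qed.

Lemma Cls'_eq x : R g x -> Cls' x = Cls x.
Proof.
move=> gx; apply/setP => y; rewrite inCls /rclass inE (R'_notI _ gx).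
apply/andP/andP => [[yD /andP[xy yx]]|[xy yx]].
  move: yD; rewrite memD => /orP[/eqP yi|gy].
    by move: gi; rewrite -yi (R_trans gx xy).
  by rewrite -(R'_notI _ gy).
have gy : R g y by apply: R_trans xy.
by rewrite memD gy orbT xy /= (R'_notI _ gy).
Qed.

Local Notation qa := (qact add zero act I).

Lemma rclasses'_cases G' : G' \in rclasses D' qa ->
  G' = [set inf] \/ exists2 x, R g x & G' = Cls x.
Proof.
case/imsetP => x; rewrite memD => /orP[/eqP->|gx] ->; first by left; exact: Cls'_inf.
by right; exists x => //; exact: Cls'_eq.
Qed.

Lemma Cls_in_rclasses' x : R g x -> Cls x \in rclasses D' qa.
Proof. by move=> gx; apply/imsetP; exists x; rewrite ?memD ?gx ?orbT ?Cls'_eq. Qed.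

Lemma clt'_min x : R g x -> clt qa [set inf] (Cls x).
Proof.
move=> gx; apply/andP; split.
  apply/existsP; exists inf; rewrite inE eqxx /=.
  by apply/existsP; exists x; rewrite inCls R_refl R'_inf.
apply/negP => /eqP e; have : x \in Cls x by rewrite inCls R_refl.
rewrite -e inE => /eqP xi; move: gi; rewrite -xi gx //.
Qed.

Lemma cle'_Cls x y : R g x -> R g y -> cle qa (Cls x) (Cls y) = R x y.
Proof.
move=> gx gy; apply/idP/idP.
  case/existsP=> a /andP[]; rewrite inCls => /andP[xa _] /existsP[b /andP[]].
  rewrite inCls => /andP[_ yb]; rewrite R'_notI; last exact: R_trans xa.
  by move=> ab; apply: R_trans xa (R_trans ab yb).
move=> xy; apply/existsP; exists x; rewrite inCls R_refl /=.
by apply/existsP; exists y; rewrite inCls R_refl /= R'_notI.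
Qed.

Lemma qsub_eq : q_subminimals add zero act I = [set Cls g].
Proof.
have gg := R_refl g.
apply/setP => G'; rewrite /q_subminimals /subminimals !inE /subminimal Gmin'.
apply/idP/eqP => [|->].
  case/andP => G'in /and3P[_ lt /forall_inP F].
  case: (rclasses'_cases G'in) => [e|[x gx e]].
    by move: lt; rewrite e /clt eqxx andbF.
  have := F _ (Cls_in_rclasses' gg); rewrite clt'_min //= /clt e cle'_Cls //= gx /=.
  by rewrite negbK => /eqP.
rewrite Cls_in_rclasses' //= clt'_min //=.
apply/forall_inP => G'' /rclasses'_cases [->|[y gy ->]].
  by rewrite /clt eqxx andbF.
rewrite andbC /clt cle'_Cls //; apply/negP => /andP[/andP[yg ne] _].
by move/negP: ne; apply; apply/eqP; apply: Cls_eq.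
Qed.
End Part2.
End Proofs.

Theorem lemma2 (A : Type) (H V : finType)
    (add : H -> H -> H) (zero : H) (mul : V -> V -> V) (one : V)
    (act : V -> H -> H) (aH : forest A -> H) (aV : context A -> V) :
  forest_algebra add zero mul one act ->
  (forall x, add x x = x) ->
  (forall x y, add x y = add y x) ->
  forest_hom add zero mul one act aH aV ->
  let subs := subminimals [set: H] add zero act in
  let Gmin0 := Gmin [set: H] add zero act in
  (* alpha_{Gamma_min} factors through prod_j alpha_{>= Gamma_j} *)
  (forall s s' : forest A,
     [seq qval add zero (ideal_ge act G) (aH s) | G <- enum subs] =
     [seq qval add zero (ideal_ge act G) (aH s') | G <- enum subs] ->
     qval add zero (ideal_gt act Gmin0) (aH s) =
     qval add zero (ideal_gt act Gmin0) (aH s'))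
  /\
  (* each (H_{>=Gamma_j}, V_{>=Gamma_j}) has a unique subminimal class *)
  (forall G, G \in subs ->
     #|q_subminimals add zero act (ideal_ge act G)| = 1).
Proof.
move=> FA idem comm _ subs Gmin0; split.
  by move=> s s' E; apply: (part1 FA idem comm E).
move=> G; rewrite inE => /andP[/imsetP[g _ ->] /and3P[_ lt _]].
have gi : ~~ reachb act g (infty [set: H] add zero).
  apply/negP => gi; move: lt; rewrite /clt /Gmin.
  by rewrite (Cls_eq FA (R_inf FA idem comm g) gi) eqxx andbF.
by rewrite (qsub_eq FA idem comm gi) cards1.
Qed.
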